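(* Let $\mathrm R(t,s):=\sin\left(\frac{\pi}{2}t\right)\frac{s+\sqrt{8-s^2}}{2\sqrt2}$ on $[0,1]\times[2,2\sqrt2]$ and let $\widehat{\mathrm R}$ be its concave envelope on this domain. For $(t,s)\in(0,1]\times[2,2\sqrt2]$, writing $\epsilon=1-\frac{s}{2\sqrt2}$, one has $\mathrm R(t,s)=\widehat{\mathrm R}(t,s)$ if and only if $$\frac{\tan\left(\frac{\pi}{2}t\right)}{\frac{\pi}{2}t}\ \ge\ \frac{2+\sqrt{(2-\epsilon)\epsilon}-\epsilon(5-2\epsilon)}{2(1-\epsilon)}$$ (with the left side interpreted as $+\infty$ at $t=1$). Moreover, this condition is implied by $\frac{\frac{\pi}{2}t}{\sin(\frac{\pi}{2}t)}\ge \frac{s+\sqrt{8-s^2}}{2\sqrt2}$, i.e. by $\frac{\pi}{2}t\ge \mathrm R(t,s)$.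
   Context: The concave envelope of a function $F$ on a convex domain $D$ is the pointwise smallest concave function $\widehat F:D\to\mathbb R$ with $\widehat F\ge F$ on $D$. *)

(* Defs.v *)
From HB Require Import structures.
From mathcomp Require Import all_boot all_order all_algebra.
From mathcomp Require Import all_classical all_reals all_analysis.
Set Implicit Arguments. Unset Strict Implicit. Unset Printing Implicit Defensive.
Import Order.TTheory GRing.Theory Num.Theory.
Local Open Scope classical_set_scope.
Local Open Scope ring_scope.

Definition Dom (R : realType) : set (R * R) :=
  [set p | 0 <= p.1 <= 1 /\ 2 <= p.2 <= 2 * Num.sqrt 2].

Definition concave_on (R : realType) (D : set (R * R)) (g : R -> R -> R) : Prop :=
  forall p q : R * R, D p -> D q -> forall l : R, 0 <= l <= 1 ->
    l * g p.1 p.2 + (1 - l) * g q.1 q.2 <=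
    g (l * p.1 + (1 - l) * q.1) (l * p.2 + (1 - l) * q.2).

Definition concave_envelope (R : realType) (D : set (R * R)) (F : R -> R -> R)
  (t s : R) : R :=
  inf [set g t s | g in [set g : R -> R -> R |
        concave_on D g /\ forall p, D p -> F p.1 p.2 <= g p.1 p.2]].

Definition Rfun (R : realType) (t s : R) : R :=
  sin (pi / 2 * t) * ((s + Num.sqrt (8 - s ^+ 2)) / (2 * Num.sqrt 2)).

Definition epsilon_of (R : realType) (s : R) : R := 1 - s / (2 * Num.sqrt 2).

Definition crit_rhs (R : realType) (e : R) : R :=
  (2 + Num.sqrt ((2 - e) * e) - e * (5 - 2 * e)) / (2 * (1 - e)).

(* The criterion, with tan(pi t/2)/(pi t/2) read as +oo at t = 1. *)
Definition criterion (R : realType) (t s : R) : Prop :=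
  t < 1 -> crit_rhs (epsilon_of s) <= tan (pi / 2 * t) / (pi / 2 * t).

(* Main.v *)
Require Import Defs.
From HB Require Import structures.
From mathcomp Require Import all_boot all_order all_algebra.
From mathcomp Require Import all_classical all_reals all_analysis.
From mathcomp Require Import ring lra.
Import Order.TTheory GRing.Theory Num.Theory.
Import numFieldNormedType.Exports.
Local Open Scope classical_set_scope.
Local Open Scope ring_scope.

Lemma deriv_cont {R : realType} {f df : R -> R} :
  (forall y : R, is_derive y 1 f (df y)) -> continuous f.
Proof.
move=> H y; apply/differentiable_continuous/derivable1_diffP.
exact: (@ex_derive _ _ _ _ _ _ _ (H y)).
Qed.

Lemma incr_on {R : realType} (f df : R -> R) (a b : R) :
  (forall y : R, is_derive y 1 f (df y)) -> (forall y, a < y < b -> 0 <= df y) ->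
  forall u v, a <= u -> u <= v -> v <= b -> f u <= f v.
Proof.
move=> H Hd; apply: ger0_derive1_ndecr.
- move=> z _; exact: (@ex_derive _ _ _ _ _ _ _ (H z)).
- by move=> z; rewrite in_itv /= => zab; rewrite derive1E derive_val; apply: Hd.
- apply: continuous_subspaceT => z; have := deriv_cont H z; exact.
Qed.

Lemma decr_on {R : realType} (f df : R -> R) (a b : R) :
  (forall y : R, is_derive y 1 f (df y)) -> (forall y, a < y < b -> df y <= 0) ->
  forall u v, a <= u -> u <= v -> v <= b -> f v <= f u.
Proof.
move=> H Hd u v au uv vb.
have H' : forall y : R, is_derive y 1 (fun z => - f z) (- df y).
  move=> y; apply: is_derive_eq; rewrite /GRing.scale /=. 
  by [].
have := @incr_on R (fun z => - f z) (fun z => - df z) a b H' _ u v au uv vb.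
rewrite lerN2; apply => y /Hd; by rewrite oppr_ge0.
Qed.

Lemma sincr_on {R : realType} (f df : R -> R) (a b : R) :
  (forall y : R, is_derive y 1 f (df y)) -> (forall y, a < y < b -> 0 < df y) ->
  forall u v, a <= u -> u < v -> v <= b -> f u < f v.
Proof.
move=> H Hd u v au uv vb.
apply: (@gtr0_derive1_lt_cc _ f a b).
- move=> z _; exact: (@ex_derive _ _ _ _ _ _ _ (H z)).
- by move=> z; rewrite in_itv /= => zab; rewrite derive1E derive_val; apply: Hd.
- apply: continuous_subspaceT => z; have := deriv_cont H z; exact.
- by rewrite in_itv /= au (le_trans (ltW uv) vb).
- by rewrite in_itv /= vb (le_trans au (ltW uv)).
- exact: uv.
Qed.

Lemma sdecr_on {R : realType} (f df : R -> R) (a b : R) :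
  (forall y : R, is_derive y 1 f (df y)) -> (forall y, a < y < b -> df y < 0) ->
  forall u v, a <= u -> u < v -> v <= b -> f v < f u.
Proof.
move=> H Hd u v au uv vb.
have H' : forall y : R, is_derive y 1 (fun z => - f z) (- df y).
  move=> y; apply: is_derive_eq; rewrite /GRing.scale /=. 
  by [].
have := @sincr_on R (fun z => - f z) (fun z => - df z) a b H' _ u v au uv vb.
rewrite ltrN2; apply => y /Hd; by rewrite oppr_gt0.
Qed.

Lemma shape_lemma {R : realType} (P P1 m : R -> R) (x b : R) :
  (forall y : R, is_derive y 1 P (P1 y)) -> (forall y : R, is_derive y 1 P1 (m y)) ->
  (forall u v, 0 <= u -> u <= v -> v <= b -> m u <= m v) ->
  0 < x -> x < b -> P x = 0 -> P1 x = 0 -> 0 <= P 0 ->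
  forall y, 0 <= y -> y <= b -> 0 <= P y.
Proof.
move=> dP dP1 mon x0 xb Px P1x P0 y y0 yb.
have mx : 0 <= m x.
  rewrite leNgt; apply/negP => mx0.
  have P1pos : forall u, 0 <= u -> u < x -> 0 < P1 u.
    move=> u u0 ux; rewrite -P1x.
    apply: (@sdecr_on R P1 m 0 x dP1) => //.
    move=> z /andP[z0 zx]; apply: le_lt_trans mx0.
    by apply: mon => //; [exact: ltW | exact: ltW | exact: ltW].
  have : P 0 < P x.
    apply: (@sincr_on R P P1 0 x dP) => //.
    by move=> z /andP[z0 zx]; apply: P1pos => //; exact: ltW.
  by rewrite Px ltNge P0.
case: (leP x y) => xy.
  rewrite -Px; apply: (@incr_on R P P1 x b dP) => //.
  move=> z /andP[xz zb]; rewrite -P1x.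
  apply: (@incr_on R P1 m x b dP1) => //; [|exact: ltW|exact: ltW].
  move=> w /andP[xw wb]; apply: (le_trans mx); apply: mon => //.
  - exact: ltW.
  - exact: ltW.
  - exact: ltW.
case: (boolP ((m y < 0) && (0 <= P1 y))) => [/andP[my P1y]|H].
  apply: (le_trans P0); apply: (@incr_on R P P1 0 y dP) => //.
  move=> z /andP[z0 zy]; apply: (le_trans P1y).
  apply: (@decr_on R P1 m 0 y dP1) => //; [|exact: ltW|exact: ltW].
  move=> w /andP[w0 wy]; apply: ltW; apply: le_lt_trans my; apply: mon.
  - exact: ltW.
  - exact: ltW.
  - by apply: ltW; apply: (lt_trans xy).
rewrite -Px; apply: (@decr_on R P P1 y x dP) => //; last exact: ltW.
move=> z /andP[yz zx].
case: (leP 0 (m z)) => mz.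
  rewrite -P1x; apply: (@incr_on R P1 m z x dP1) => //; last exact: ltW.
  move=> w /andP[zw wx]; apply: (le_trans mz); apply: mon.
  - by apply: (le_trans y0); apply: ltW.
  - exact: ltW.
  - by apply: ltW; apply: (lt_trans wx).
have P1y : P1 y < 0.
  rewrite ltNge; apply/negP => P1y; move/negP: H; apply; apply/andP; split => //.
  apply: le_lt_trans mz; apply: mon => //; first exact: ltW.
  by apply: ltW; apply: (lt_trans zx).
apply: ltW; apply: le_lt_trans P1y.
apply: (@decr_on R P1 m y z dP1) => //; last exact: ltW.
move=> w /andP[yw wz]; apply: ltW; apply: le_lt_trans mz; apply: mon.
- by apply: (le_trans y0); apply: ltW.
- exact: ltW.
- by apply: ltW; apply: (lt_trans zx).
Qed.

Lemma sin_mono {R : realType} (u v : R) : 0 <= u -> u <= v -> v <= pi / 2 -> sin u <= sin v.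
Proof.
move=> u0 uv vp.
apply: (@incr_on R sin cos 0 (pi/2)) => // y /andP[y0 yp].
apply: cos_ge0_pihalf; apply/andP; split; last exact: ltW.
apply: le_trans (ltW y0); rewrite oppr_le0; apply: divr_ge0 => //; exact: pi_ge0.
Qed.

Lemma cos_anti {R : realType} (u v : R) : 0 <= u -> u <= v -> v <= pi -> cos v <= cos u.
Proof.
move=> u0 uv vp.
apply: (@decr_on R cos (fun y => - sin y) 0 pi) => // y /andP[y0 yp].
rewrite oppr_le0; apply: sin_ge0_pi; apply/andP; split; exact: ltW.
Qed.

Lemma xcos_le_sin {R : realType} (x : R) : 0 <= x -> x <= pi -> x * cos x <= sin x.
Proof.
move=> x0 xp.
have D : forall y : R, is_derive y 1 (fun z => sin z - z * cos z) (y * sin y).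
  move=> y; apply: is_derive_eq; rewrite /GRing.scale /=; ring.
have := @incr_on R _ _ 0 pi D _ 0 x (lexx 0) x0 xp.
rewrite sin0 mul0r subr0 subr_ge0; apply.
move=> y /andP[y0 yp]; apply: mulr_ge0; first exact: ltW.
apply: sin_ge0_pi; apply/andP; split; exact: ltW.
Qed.

Lemma sin_tangent {R : realType} (x y : R) : 0 <= x -> x <= pi -> 0 <= y -> y <= pi ->
  sin y <= sin x + cos x * (y - x).
Proof.
move=> x0 xp y0 yp.
have D : forall z : R, is_derive z 1 (fun z => sin x + cos x * (z - x) - sin z) (cos x - cos z).
  move=> z; apply: is_derive_eq; rewrite /GRing.scale /=; ring.
rewrite -subr_ge0.
have -> : 0 = sin x + cos x * (x - x) - sin x by rewrite subrr mulr0 addr0 subrr.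
case: (leP x y) => xy.
  apply: (@incr_on R _ _ x pi D) => // z /andP[xz zp].
  by rewrite subr_ge0; apply: cos_anti => //; apply: ltW.
apply: (@decr_on R _ _ 0 x D) => //; last exact: ltW.
move=> z /andP[z0 zx]; rewrite subr_le0; apply: cos_anti => //; first exact: ltW.
exact: ltW.
Qed.

Lemma pos_from_deriv {R : realType} (f df : R -> R) :
  (forall y : R, is_derive y 1 f (df y)) -> f 0 = 0 -> (forall y, 0 < y -> 0 <= df y) ->
  forall y, 0 <= y -> 0 <= f y.
Proof.
move=> D f0 H y y0; rewrite -f0; apply: (@incr_on R f df 0 y D) => //.
by move=> z /andP[z0 _]; apply: H.
Qed.

Lemma cube_ineq {R : realType} (x : R) : 0 <= x -> x <= 2 ->
  x ^+ 3 * cos x <= sin x ^+ 3.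
Proof.
move=> x0 x2.
have D1 : forall y : R, is_derive y 1 (fun y => y - sin y) (1 - cos y).
  move=> y; apply: is_derive_eq; rewrite /GRing.scale /=; ring.
have f1 : forall y : R, 0 <= y -> 0 <= y - sin y.
  apply: (@pos_from_deriv R _ _ D1).
  - by rewrite /= sin0 subr0.
  - by move=> y _; rewrite subr_ge0 cos_le1.
have D2 : forall y : R, is_derive y 1 (fun y => cos y - 1 + y ^+ 2 / 2) (y - sin y).
  move=> y; apply: is_derive_eq; rewrite /GRing.scale /=; field; by rewrite ?pnatr_eq0.
have f2 : forall y : R, 0 <= y -> 0 <= cos y - 1 + y ^+ 2 / 2.
  apply: (@pos_from_deriv R _ _ D2).
  - by rewrite /= cos0 subrr expr0n /= mul0r addr0.
  - by move=> y y0; apply: f1; exact: ltW.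
have D3 : forall y : R, is_derive y 1 (fun y => sin y - y + y ^+ 3 / 6) (cos y - 1 + y ^+ 2 / 2).
  move=> y; apply: is_derive_eq; rewrite /GRing.scale /=; field; by rewrite ?pnatr_eq0.
have f3 : forall y : R, 0 <= y -> 0 <= sin y - y + y ^+ 3 / 6.
  apply: (@pos_from_deriv R _ _ D3).
  - by rewrite /= sin0 subrr expr0n /= mul0r addr0.
  - by move=> y y0; apply: f2; exact: ltW.
have D4 : forall y : R, is_derive y 1 (fun y => 1 - y ^+ 2 / 2 + y ^+ 4 / 24 - cos y) (sin y - y + y ^+ 3 / 6).
  move=> y; apply: is_derive_eq; rewrite /GRing.scale /=; field; by rewrite ?pnatr_eq0.
have f4 : forall y : R, 0 <= y -> 0 <= 1 - y ^+ 2 / 2 + y ^+ 4 / 24 - cos y.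
  apply: (@pos_from_deriv R _ _ D4).
  - by rewrite /= cos0 expr0n /= mul0r expr0n /= mul0r subr0 addr0 subrr.
  - by move=> y y0; apply: f3; exact: ltW.
have h3 := f3 x x0; have h4 := f4 x x0.
have s1 : x - x ^+ 3 / 6 <= sin x by lra.
have s0 : 0 <= x - x ^+ 3 / 6 by nra.
have c1 : cos x <= 1 - x ^+ 2 / 2 + x ^+ 4 / 24 by lra.
have e1 : (x - x ^+ 3 / 6) ^+ 3 <= sin x ^+ 3.
  by apply: lerXn2r => //; rewrite nnegrE //; apply: le_trans s1.
apply: le_trans e1.
apply: (@le_trans _ _ (x ^+ 3 * (1 - x ^+ 2 / 2 + x ^+ 4 / 24))).
  by apply: ler_wpM2l => //; apply: exprn_ge0.
have x24 : x ^+ 2 <= 4 by nra.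
have hx : 0 <= x ^+ 4 * (x ^+ 2 / 24 - x ^+ 4 / 216).
  apply: mulr_ge0; first exact: exprn_ge0.
  nra.
nra.
Qed.

Lemma plane_ineq {R : realType} (x c sg y cp sp : R) :
  0 < x -> x < pi / 2 -> 0 < sg -> sg <= c -> c ^+ 2 + sg ^+ 2 = 1 ->
  0 <= (c + sg) * sin x - (c + sg) * x * cos x - sin x * (c - sg) / sg * (1 - c) ->
  0 <= y -> y <= pi / 2 -> cp ^+ 2 + sp ^+ 2 = 1 ->
  sin y * (cp + sp) <= (c + sg) * (sin x + cos x * (y - x)) - sin x * (c - sg) / sg * (cp - c).
Proof.
move=> x0 xp sg0 sgc csg K0 y0 yp cpsp.
set H := c + sg.
set be := sin x * (c - sg) / sg.
set a := H * cos x.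
set C0 := H * sin x - H * cos x * x + be * c.
have pi0 : 0 < pi / 2 :> R by rewrite divr_gt0 // pi_gt0.
have sinx0 : 0 < sin x by apply: sin_gt0_pihalf; rewrite x0 xp.
have cosx0 : 0 < cos x.
  apply: cos_gt0_pihalf; rewrite xp andbT; apply: lt_trans x0; rewrite oppr_lt0 //.
have be0 : 0 <= be by rewrite /be; apply: divr_ge0; [apply: mulr_ge0; lra | lra].
have H0 : 0 <= H by rewrite /H; lra.
have a0 : 0 <= a by rewrite /a; apply: mulr_ge0 => //; exact: ltW.
have C0be : be <= C0 by rewrite /C0; move: K0; rewrite -/H -/be; lra.
pose P := fun z : R => (C0 + a * z) ^+ 2 - (sin z + be) ^+ 2 - sin z ^+ 2.
pose P1 := fun z : R => 2 * a * (C0 + a * z) - 2 * (sin z + be) * cos z - 2 * sin z * cos z.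
pose m := fun z : R => 2 * a ^+ 2 - 4 * cos z ^+ 2 + 4 * sin z ^+ 2 + 2 * be * sin z.
have dP : forall z : R, is_derive z 1 P (P1 z).
  move=> z; apply: is_derive_eq; rewrite /P1 /GRing.scale /=; ring.
have dP1 : forall z : R, is_derive z 1 P1 (m z).
  move=> z; apply: is_derive_eq; rewrite /m /GRing.scale /=; ring.
have mon : forall u v, 0 <= u -> u <= v -> v <= pi / 2 -> m u <= m v.
  move=> u v u0 uv vp; rewrite /m !cos2sin2.
  have su := @sin_mono _ u v u0 uv vp.
  have upi : u <= pi by have := @pi_gt0 R; lra.
  have su0 : 0 <= sin u by apply: sin_ge0_pi; rewrite u0 upi.
  nra.
have sgn0 : sg != 0 by rewrite gt_eqF.
have e1 : C0 + a * x = sin x / sg.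
  transitivity (sin x * (c ^+ 2 + sg ^+ 2) / sg); last by rewrite csg mulr1.
  rewrite /C0 /a /be /H; field; exact: sgn0.
have e2 : sin x + be = sin x * c / sg.
  rewrite /be; field; exact: sgn0.
have Px : P x = 0.
  rewrite /P e1 e2.
  transitivity (sin x ^+ 2 * (1 - (c ^+ 2 + sg ^+ 2)) / sg ^+ 2).
    field; exact: sgn0.
  by rewrite csg subrr mulr0 mul0r.
have P1x : P1 x = 0.
  rewrite /P1 e1 e2 /a /H; field; exact: sgn0.
have P0 : 0 <= P 0.
  rewrite /P sin0 mulr0 addr0 add0r expr0n /= subr0; nra.
have Py := @shape_lemma R P P1 m x (pi / 2) dP dP1 mon x0 xp Px P1x P0 y y0 yp.
have siny0 : 0 <= sin y.
  apply: sin_ge0_pi; rewrite y0 /=; have := @pi_gt0 R; lra.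
have Lv0 : 0 <= C0 + a * y by nra.
have -> : (c + sg) * (sin x + cos x * (y - x)) - sin x * (c - sg) / sg * (cp - c)
   = C0 + a * y - be * cp by rewrite /C0 /a /be /H; ring.
have CS : ((sin y + be) * cp + sin y * sp) ^+ 2 <= (sin y + be) ^+ 2 + sin y ^+ 2.
  have := sqr_ge0 ((sin y + be) * sp - sin y * cp).
  have -> : (sin y + be) ^+ 2 + sin y ^+ 2 = ((sin y + be) ^+ 2 + sin y ^+ 2) * (cp ^+ 2 + sp ^+ 2)
    by rewrite cpsp mulr1.
  nra.
move: Py; rewrite /P => Py.
nra.
Qed.
Lemma deriv_pos_exists {R : realType} (f : R -> R) (d v del : R) :
  is_derive (0:R) 1 f d -> v < d -> 0 < del ->
  exists h, [/\ 0 < h, h < del & f 0 + h * v < f h].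
Proof.
move=> fd vd del0.
have cv : (fun h : R => h^-1 *: ((f \o shift 0) (h *: 1) - f 0)) @ 0^' --> d.
  have := @ex_derive _ _ _ _ _ _ _ fd.
  rewrite /derivable => H.
  have <- : 'D_1 f 0 = d by apply: derive_val.
  exact: H.
have [e /= e0 He] := @cvgr_gt R _ _ _ _ d cv v vd.
pose h := Num.min (e / 2) (del / 2).
have h0 : 0 < h by rewrite /h lt_min !divr_gt0.
have he : h < e by rewrite /h gt_min; apply/orP; left; rewrite ltr_pdivrMr //; lra.
have hd : h < del by rewrite /h gt_min; apply/orP; right; rewrite ltr_pdivrMr //; lra.
have hb : ball_ Num.Def.normr 0 e h by rewrite /ball_ /= sub0r normrN gtr0_norm.
have := He h hb; rewrite gt_eqF //=.
move=> /(_ isT); rewrite /GRing.scale /= mulr1 addr0.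
rewrite ltr_pdivlMl // => hq.
by exists h; split => //; rewrite -ltrBrDl.
Qed.

Lemma env_eq {R : realType} (F g : R -> R -> R) (t s : R) :
  Dom (t, s) -> concave_on (@Dom R) g ->
  (forall p, Dom p -> F p.1 p.2 <= g p.1 p.2) -> g t s = F t s ->
  concave_envelope (@Dom R) F t s = F t s.
Proof.
move=> Dp cg mg gts; rewrite /concave_envelope.
set S := [set _ | _ in _].
have Sg : S (F t s) by exists g.
have lbS : lbound S (F t s) by move=> y [g' [cg' mg'] <-]; exact: (mg' (t, s) Dp).
apply/le_anti/andP; split.
  by apply: (ge_inf _ Sg); exists (F t s).
by apply: lb_le_inf => //; exists (F t s).
Qed.

Lemma env_ge {R : realType} (F : R -> R -> R) (t s v : R) :
  (exists g, concave_on (@Dom R) g /\ (forall p, Dom p -> F p.1 p.2 <= g p.1 p.2)) ->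
  (forall g, concave_on (@Dom R) g -> (forall p, Dom p -> F p.1 p.2 <= g p.1 p.2) -> v <= g t s) ->
  v <= concave_envelope (@Dom R) F t s.
Proof.
move=> [g0 [cg0 mg0]] H; rewrite /concave_envelope.
apply: lb_le_inf; first by exists (g0 t s); exists g0.
by move=> y [g [cg mg] <-]; apply: H.
Qed.

Lemma R2_facts {R : realType} : 0 < 2 * Num.sqrt 2 :> R /\ (2 * Num.sqrt 2) ^+ 2 = 8 :> R.
Proof.
have s2 : Num.sqrt 2 ^+ 2 = 2 :> R by rewrite sqr_sqrtr.
have s0 : 0 < Num.sqrt 2 :> R by rewrite sqrtr_gt0.
split; first by rewrite mulr_gt0.
by rewrite exprMn s2; ring.
Qed.

Lemma s_facts {R : realType} (s : R) : 2 <= s -> s <= 2 * Num.sqrt 2 ->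
  let q := Num.sqrt (8 - s ^+ 2) in
  let c := s / (2 * Num.sqrt 2) in let sg := q / (2 * Num.sqrt 2) in
  [/\ 0 <= 8 - s ^+ 2, q ^+ 2 = 8 - s ^+ 2, 0 <= q,
      c ^+ 2 + sg ^+ 2 = 1 & [/\ 0 <= sg, sg <= c, c <= 1, 0 < c &
      (s + q) / (2 * Num.sqrt 2) = c + sg]].
Proof.
move=> s2 sR q c sg.
have [R0 R8] := @R2_facts R.
have h8 : 0 <= 8 - s ^+ 2.
  have : s ^+ 2 <= (2 * Num.sqrt 2) ^+ 2 by rewrite ler_sqr // nnegrE; [lra | exact: ltW].
  by rewrite R8 subr_ge0.
have q2 : q ^+ 2 = 8 - s ^+ 2 by rewrite /q sqr_sqrtr.
have q0 : 0 <= q by rewrite /q sqrtr_ge0.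
have Rn0 : 2 * Num.sqrt 2 != 0 :> R by rewrite gt_eqF.
have csg : c ^+ 2 + sg ^+ 2 = 1.
  rewrite /c /sg !expr_div_n q2 -mulrDl R8; field; by rewrite ?pnatr_eq0.

split => //; split.
- by rewrite /sg divr_ge0 // ltW.
- rewrite /sg /c ler_pM2r ?invr_gt0 //.
  have : q ^+ 2 <= s ^+ 2 by rewrite q2; nra.
  by rewrite ler_sqr // nnegrE; lra.
- rewrite /c ler_pdivrMr // mul1r; exact: sR.
- by rewrite /c divr_gt0 //; lra.
- by rewrite /c /sg mulrDl.
Qed.

Definition hh {R : realType} (s : R) := (s + Num.sqrt (8 - s ^+ 2)) / (2 * Num.sqrt 2).

Lemma RfunE {R : realType} (t s : R) : Rfun t s = sin (pi / 2 * t) * hh s.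
Proof. by []. Qed.

Lemma hh_bounds {R : realType} {s : R} : 2 <= s -> s <= 2 * Num.sqrt 2 -> 1 <= hh s /\ hh s <= 2.
Proof.
move=> s2 sR; have [h8 q2 q0 csg [sg0 sgc c1 c0 hE]] := @s_facts _ _ s2 sR.
rewrite /hh hE; split; nra.
Qed.

Lemma hh_concave {R : realType} {s1 s2 l : R} :
  2 <= s1 -> s1 <= 2 * Num.sqrt 2 -> 2 <= s2 -> s2 <= 2 * Num.sqrt 2 -> 0 <= l -> l <= 1 ->
  l * hh s1 + (1 - l) * hh s2 <= hh (l * s1 + (1 - l) * s2).
Proof.
move=> a1 b1 a2 b2 l0 l1.
set s3 := l * s1 + (1 - l) * s2.
have a3 : 2 <= s3 by rewrite /s3; nra.
have b3 : s3 <= 2 * Num.sqrt 2 by rewrite /s3; nra.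
have [R0 R8] := @R2_facts R.
have [h1 q1 q10 _ _] := @s_facts _ _ a1 b1.
have [h2 q2 q20 _ _] := @s_facts _ _ a2 b2.
have [h3 q3 q30 _ _] := @s_facts _ _ a3 b3.
set A := Num.sqrt (8 - s1 ^+ 2) in q1 q10 *.
set B := Num.sqrt (8 - s2 ^+ 2) in q2 q20 *.
set C := Num.sqrt (8 - s3 ^+ 2) in q3 q30 *.
rewrite /hh -/A -/B -/C.
have sR1 : s1 ^+ 2 <= 8 by lra.
have sR2 : s2 ^+ 2 <= 8 by lra.
have p12 : s1 * s2 <= 8 by nra.
have AB0 : 0 <= A * B by apply: mulr_ge0.
have AB2 : (A * B) ^+ 2 = (8 - s1 ^+ 2) * (8 - s2 ^+ 2) by rewrite exprMn q1 q2.
have hAB : A * B <= 8 - s1 * s2.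
  have : (A * B) ^+ 2 <= (8 - s1 * s2) ^+ 2.
    rewrite AB2 -subr_ge0.
    have -> : (8 - s1 * s2) ^+ 2 - (8 - s1 ^+ 2) * (8 - s2 ^+ 2) = 8 * (s1 - s2) ^+ 2 by ring.
    by rewrite mulr_ge0 // sqr_ge0.
  by rewrite ler_sqr // nnegrE; lra.
have LC : (l * A + (1 - l) * B) ^+ 2 <= C ^+ 2.
  rewrite q3 /s3.
  have e : (l * A + (1 - l) * B) ^+ 2 = l ^+ 2 * A ^+ 2 + (1 - l) ^+ 2 * B ^+ 2 + 2 * (l * (1 - l)) * (A * B) by ring.
  rewrite e q1 q2.
  have lm : 0 <= l * (1 - l) by nra.
  nra.
have LC' : l * A + (1 - l) * B <= C.
  by move: LC; rewrite ler_sqr // nnegrE; nra.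
rewrite !mulrA -mulrDl ler_pM2r ?invr_gt0 //.
rewrite /s3; lra.
Qed.

Lemma pi2_facts {R : realType} {t : R} : 0 <= t -> t <= 1 ->
  0 <= pi / 2 * t /\ pi / 2 * t <= pi / 2 /\ pi / 2 <= pi :> R /\ 0 < pi / 2 :> R /\ pi / 2 < 2 :> R.
Proof.
move=> t0 t1; have p0 := @pi_gt0 R; have p2 := @pihalf_lt2 R.
have ph : 0 < pi / 2 :> R by rewrite divr_gt0.
split; first by rewrite mulr_ge0 // ltW.
split; first by rewrite ler_piMr // ltW.
split; first by lra.
by split.
Qed.

Lemma Rfun_bounds {R : realType} {t s : R} : 0 <= t -> t <= 1 -> 2 <= s -> s <= 2 * Num.sqrt 2 ->
  0 <= Rfun t s /\ Rfun t s <= hh s.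
Proof.
move=> t0 t1 s2 sR; have [h1 h2] := hh_bounds s2 sR.
have [x0 [xp [pp _]]] := pi2_facts t0 t1.
have si0 : 0 <= sin (pi / 2 * t) by apply: sin_ge0_pi; rewrite x0 (le_trans xp pp).
have si1 := sin_le1 (pi / 2 * t).
rewrite RfunE; split; nra.
Qed.

Lemma ex_major {R : realType} : exists g : R -> R -> R,
  concave_on (@Dom R) g /\ (forall p, Dom p -> Rfun p.1 p.2 <= g p.1 p.2).
Proof.
exists (fun _ _ => 2); split.
  by move=> p q _ _ l _; rewrite /=; lra.
move=> [a b] [/andP[a0 a1] /andP[b2 bR]] /=.
have [_ h] := Rfun_bounds a0 a1 b2 bR; have [_ h2] := hh_bounds b2 bR; lra.
Qed.

Lemma env_t1 {R : realType} (s : R) : 2 <= s -> s <= 2 * Num.sqrt 2 ->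
  concave_envelope (@Dom R) (@Rfun R) 1 s = Rfun 1 s.
Proof.
move=> s2 sR; apply: (@env_eq R _ (fun _ s' => hh s')).
- by split; [rewrite ler01 lexx | rewrite s2 sR].
- move=> [a1 b1] [a2 b2] [_ /andP[c1 d1]] [_ /andP[c2 d2]] l /andP[l0 l1] /=.
  exact: hh_concave.
- move=> [a b] [/andP[a0 a1] /andP[b2 bR]] /=.
  by have [_ h] := Rfun_bounds a0 a1 b2 bR.
- by rewrite RfunE mulr1 sin_pihalf mul1r.
Qed.

Lemma env_top {R : realType} (t : R) : 0 <= t -> t <= 1 ->
  concave_envelope (@Dom R) (@Rfun R) t (2 * Num.sqrt 2) = Rfun t (2 * Num.sqrt 2).
Proof.
move=> t0 t1.
have [R0 R8] := @R2_facts R.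
have [x0 [xp [pp [p0 p2]]]] := pi2_facts t0 t1.
set x := pi / 2 * t in x0 xp *.
have hR : hh (2 * Num.sqrt 2) = 1 :> R.
  by rewrite /hh R8 subrr sqrtr0 addr0 divff // gt_eqF.
apply: (@env_eq R _ (fun t' s' => sin x + cos x * (pi / 2 * t' - x) + hh s' - 1)).
- split; first by rewrite t0 t1.
  have s2 : Num.sqrt 2 ^+ 2 = 2 :> R by rewrite sqr_sqrtr.
  have := @sqrtr_ge0 R 2; rewrite /= lexx andbT; nra.
- move=> [a1 b1] [a2 b2] [_ /andP[c1 d1]] [_ /andP[c2 d2]] l /andP[l0 l1] /=.
  have := hh_concave c1 d1 c2 d2 l0 l1; lra.
- move=> [a b] [/andP[a0 a1] /andP[b2 bR]] /=.
  have [y0 [yp _]] := pi2_facts a0 a1.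
  have tg := @sin_tangent R x (pi / 2 * a) x0 (le_trans xp pp) y0 (le_trans yp pp).
  have [h1 h2] := hh_bounds b2 bR.
  have si1 := sin_le1 (pi / 2 * a).
  rewrite RfunE; nra.
- by rewrite RfunE hR subrr mulr0 addr0 addrK mulr1.
Qed.

Definition cc {R : realType} (s : R) := s / (2 * Num.sqrt 2).
Definition sgg {R : realType} (s : R) := Num.sqrt (8 - s ^+ 2) / (2 * Num.sqrt 2).
Definition K0 {R : realType} (t s : R) :=
  (cc s + sgg s) * sin (pi / 2 * t) - (cc s + sgg s) * (pi / 2 * t) * cos (pi / 2 * t)
  - sin (pi / 2 * t) * (cc s - sgg s) / sgg s * (1 - cc s).

Lemma sgg_gt0 {R : realType} (s : R) : 2 <= s -> s < 2 * Num.sqrt 2 -> 0 < sgg s.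
Proof.
move=> s2 sR; have [R0 R8] := @R2_facts R.
rewrite /sgg divr_gt0 // sqrtr_gt0 subr_gt0 -R8.
by rewrite ltr_sqr // nnegrE; [lra | exact: ltW].
Qed.

Lemma env_plane {R : realType} (t s : R) : 0 < t -> t < 1 -> 2 <= s -> s < 2 * Num.sqrt 2 ->
  0 <= K0 t s -> concave_envelope (@Dom R) (@Rfun R) t s = Rfun t s.
Proof.
move=> t0 t1 s2 sR K.
have [h8 q2 q0 csg [sg0 sgc c1 c0 hE]] := @s_facts _ _ s2 (ltW sR).
have sgp := @sgg_gt0 _ s s2 sR.
have [x0 [xp [pp [p0 p2]]]] := pi2_facts (ltW t0) (ltW t1).
have xpos : 0 < pi / 2 * t by rewrite mulr_gt0.
have xlt : pi / 2 * t < pi / 2 by rewrite gtr_pMr.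
set x := pi / 2 * t in x0 xp xpos xlt K *.
rewrite -/(cc s) -/(sgg s) in csg sg0 sgc c1 c0 hE.
apply: (@env_eq R _ (fun t' s' => (cc s + sgg s) * (sin x + cos x * (pi / 2 * t' - x))
            - sin x * (cc s - sgg s) / sgg s * (s' / (2 * Num.sqrt 2) - cc s))).
- by split; [rewrite !ltW | rewrite s2 ltW].
- move=> p q _ _ l _; rewrite le_eqVlt; apply/orP; left; apply/eqP; rewrite /=; ring.
- move=> [a b] [/andP[a0 a1] /andP[b2 bR]] /=.
  have [h8' q2' q0' csg' [sg0' sgc' c1' c0' hE']] := @s_facts _ _ b2 bR.
  have [y0 [yp _]] := pi2_facts a0 a1.
  rewrite RfunE /hh hE'.
  exact: (@plane_ineq R x (cc s) (sgg s) (pi / 2 * a) _ _ xpos xlt sgp sgc csg K y0 yp csg').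
- by rewrite RfunE /hh hE /cc /sgg /x; ring.
Qed.

Lemma K0_s2 {R : realType} (t : R) : 0 <= t -> t <= 1 -> 0 <= K0 t 2.
Proof.
move=> t0 t1; have [x0 [xp [pp _]]] := pi2_facts t0 t1.
have e : Num.sqrt (8 - 2 ^+ 2) = 2 :> R.
  have -> : 8 - 2 ^+ 2 = 2 ^+ 2 :> R by rewrite expr2; lra.
  by rewrite sqrtr_sqr ger0_norm.
rewrite /K0 /sgg /cc e subrr mulr0 mul0r mul0r subr0.
have A0 : 0 <= 2 / (2 * Num.sqrt 2) + 2 / (2 * Num.sqrt 2) :> R.
  by rewrite addr_ge0 // divr_ge0 // mulr_ge0 // sqrtr_ge0.
have XC : (pi / 2 * t) * cos (pi / 2 * t) <= sin (pi / 2 * t).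
  apply: xcos_le_sin => //; exact: le_trans xp pp.
nra.
Qed.

Lemma env_gt {R : realType} (t s : R) : 0 < t -> t < 1 -> 2 <= s -> s < 2 * Num.sqrt 2 ->
  K0 t s < 0 -> Rfun t s < concave_envelope (@Dom R) (@Rfun R) t s.
Proof.
move=> t0 t1 s2 sR K.
have [R0 R8] := @R2_facts R.
have s2' : 2 < s.
  rewrite lt_neqAle s2 andbT; apply/negP => /eqP e; move: K; rewrite -e.
  by rewrite ltNge K0_s2 // ltW.
have [h8 q2 q0 csg [sg0 sgc c1 c0 hE]] := @s_facts _ _ s2 (ltW sR).
have sgp := @sgg_gt0 _ s s2 sR.
have [x0 [xp [pp [p0 p2]]]] := pi2_facts (ltW t0) (ltW t1).
pose gA := fun l : R => pi / 2 * (t + l * t).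
pose gC := fun l : R => 8 - (s + l * (s - 2 * Num.sqrt 2)) ^+ 2.
have dgA : is_derive (0:R) 1 gA (pi / 2 * t).
  by apply: is_derive_eq; rewrite /GRing.scale /=; ring.
have dgC : is_derive (0:R) 1 gC (- (2 * s * (s - 2 * Num.sqrt 2))).
  apply: is_derive_eq; rewrite /GRing.scale /=; ring.
have dsin := @is_derive1_comp R sin gA 0 _ _ (is_derive_sin _) dgA.
have gC0 : 0 < gC 0.
  rewrite /gC mul0r addr0 subr_gt0 -R8.
  by rewrite ltr_sqr // nnegrE; [lra | exact: ltW].
have dsq := @is_derive1_comp R Num.sqrt gC 0 _ _ (is_derive1_sqrt gC0) dgC.
have dB : is_derive (0:R) 1 (fun l : R => (s + l * (s - 2 * Num.sqrt 2) + (Num.sqrt \o gC) l) / (2 * Num.sqrt 2))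
   ((s - 2 * Num.sqrt 2 + (2 * Num.sqrt (gC 0))^-1 * - (2 * s * (s - 2 * Num.sqrt 2))) / (2 * Num.sqrt 2)).
  by apply: is_derive_eq; rewrite /GRing.scale /=; ring.
have dP := @is_deriveM R R (sin \o gA) (fun l : R => (s + l * (s - 2 * Num.sqrt 2) + (Num.sqrt \o gC) l) / (2 * Num.sqrt 2)) 0 1 _ _ dsin dB.
pose psi := fun l : R => Rfun (t + l * t) (s + l * (s - 2 * Num.sqrt 2)).
have dpsi : is_derive (0:R) 1 psi
   ((sin \o gA) 0 *: ((s - 2 * Num.sqrt 2 + (2 * Num.sqrt (gC 0))^-1 * - (2 * s * (s - 2 * Num.sqrt 2))) / (2 * Num.sqrt 2))
    + (fun l : R => (s + l * (s - 2 * Num.sqrt 2) + (Num.sqrt \o gC) l) / (2 * Num.sqrt 2)) 0 *: (cos (gA 0) * (pi / 2 * t))).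
  exact: dP.
set d := (X in is_derive _ _ _ X) in dpsi.
have vd : Rfun t s < d.
  rewrite /d /= /GRing.scale /= /gA /gC !mul0r !addr0 -subr_gt0.
  have qn0 : Num.sqrt (8 - s ^+ 2) != 0.
    by move: sgp; rewrite /sgg => /gt_eqF; apply: contraFneq => ->; rewrite mul0r.
  have Rn0 : 2 * Num.sqrt 2 != 0 :> R by rewrite gt_eqF.
  move: K; rewrite /K0 /cc /sgg RfunE /hh => K.
  set S := sin (pi / 2 * t) in K *; set C := cos (pi / 2 * t) in K *.
  set q := Num.sqrt (8 - s ^+ 2) in K qn0 *.
  set r := 2 * Num.sqrt 2 in K Rn0 *.
  have -> : S * ((s - r + (2 * q)^-1 * - (2 * s * (s - r))) / r) + (s + q) / r * (C * (pi / 2 * t)) - S * ((s + q) / r)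
      = - ((s / r + q / r) * S - (s / r + q / r) * (pi / 2 * t) * C - S * (s / r - q / r) / (q / r) * (1 - s / r)).
    by field; rewrite qn0 Rn0.
  by rewrite oppr_gt0.
pose del := Num.min ((1 - t) / t) ((s - 2) / (2 * Num.sqrt 2 - s)).
have del0 : 0 < del by rewrite /del lt_min !divr_gt0 //; lra.
have [h [h0 hdel hq]] := @deriv_pos_exists _ psi d (Rfun t s) del dpsi vd del0.
move: hdel; rewrite /del lt_min => /andP[hd1 hd2].
have ht : t + h * t < 1.
  have : h < (1 - t) / t by [].
  by rewrite ltr_pdivlMr // => ?; lra.
have hs : 2 < s + h * (s - 2 * Num.sqrt 2).
  have : h < (s - 2) / (2 * Num.sqrt 2 - s) by [].
  by rewrite ltr_pdivlMr ?subr_gt0 // => ?; lra.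
have psi0 : psi 0 = Rfun t s by rewrite /psi !mul0r !addr0.
rewrite psi0 in hq.
have h1 : 0 < 1 + h by lra.
apply: (@lt_le_trans _ _ (psi h / (1 + h))).
  by rewrite ltr_pdivlMr //; lra.
apply: env_ge; first exact: ex_major.
move=> g cg mg.
have Dp : Dom (t + h * t, s + h * (s - 2 * Num.sqrt 2)).
  split; rewrite /=; apply/andP; split; try lra.
  - by apply: addr_ge0; [exact: ltW | apply: mulr_ge0; exact: ltW].
  - have : 0 <= h * (2 * Num.sqrt 2 - s).
      by apply: mulr_ge0; [exact: ltW| rewrite subr_ge0; exact: ltW].
    have -> : s + h * (s - 2 * Num.sqrt 2) = s - h * (2 * Num.sqrt 2 - s) by ring.
    lra.
have Dq : Dom (0, 2 * Num.sqrt 2 : R).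
  split; rewrite /= ?lexx ?ler01 // andbT; lra.
have l01 : 0 <= 1 / (1 + h) <= 1.
  apply/andP; split; first by rewrite divr_ge0 // ltW.
  by rewrite ler_pdivrMr // mul1r; lra.
have := cg _ _ Dp Dq _ l01; rewrite /=.
have -> : 1 / (1 + h) * (t + h * t) + (1 - 1 / (1 + h)) * 0 = t.
  by field; rewrite gt_eqF.
have -> : 1 / (1 + h) * (s + h * (s - 2 * Num.sqrt 2)) + (1 - 1 / (1 + h)) * (2 * Num.sqrt 2) = s.
  by field; rewrite gt_eqF.
move=> H.
have g1 := mg _ Dp; have g2 := mg _ Dq; rewrite /= in g1 g2.
have R0' : Rfun 0 (2 * Num.sqrt 2) = 0 :> R by rewrite RfunE mulr0 sin0 mul0r.
rewrite R0' in g2.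
have l1' : 0 <= 1 - 1 / (1 + h) by case/andP: l01 => _; lra.
have : psi h / (1 + h) <= 1 / (1 + h) * g (t + h * t) (s + h * (s - 2 * Num.sqrt 2)).
  rewrite div1r [_^-1 * _]mulrC; apply: ler_wpM2r; first by rewrite invr_ge0 ltW.
  exact: g1.
nra.
Qed.

Lemma tan_div {R : realType} (x : R) : 0 < x -> 0 < cos x -> tan x / x = sin x / (cos x * x).
Proof. move=> x0 c0; rewrite /tan; field; by rewrite ?gt_eqF. Qed.

Lemma crit_top {R : realType} (t : R) : 0 < t -> t <= 1 -> criterion t (2 * Num.sqrt 2).
Proof.
move=> t0 t1 tl1; have [R0 R8] := @R2_facts R.
have [x0 [xp [pp [p0 p2]]]] := pi2_facts (ltW t0) t1.
have xpos : 0 < pi / 2 * t by rewrite mulr_gt0.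
have xlt : pi / 2 * t < pi / 2 by rewrite gtr_pMr.
have C0 : 0 < cos (pi / 2 * t) by apply: cos_gt0_pihalf; rewrite xlt andbT; lra.
have -> : epsilon_of (2 * Num.sqrt 2) = 0 :> R by rewrite /epsilon_of divff ?gt_eqF // subrr.
rewrite /crit_rhs subr0 !mulr0 sqrtr0 addr0 mul0r !subr0 mulr1 divff ?pnatr_eq0 // tan_div //.
rewrite ler_pdivlMr; last by rewrite mulr_gt0.
rewrite mul1r mulrC; apply: xcos_le_sin; lra.
Qed.

Lemma crit_iff {R : realType} (t s : R) : 0 < t -> t < 1 -> 2 <= s -> s < 2 * Num.sqrt 2 ->
  criterion t s <-> 0 <= K0 t s.
Proof.
move=> t0 t1 s2 sR.
have [h8 q2 q0 csg [sg0 sgc c1 c0 hE]] := @s_facts _ _ s2 (ltW sR).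
have sgp := @sgg_gt0 _ s s2 sR.
have [x0 [xp [pp [p0 p2]]]] := pi2_facts (ltW t0) (ltW t1).
have xpos : 0 < pi / 2 * t by rewrite mulr_gt0.
have xlt : pi / 2 * t < pi / 2 by rewrite gtr_pMr.
have C0 : 0 < cos (pi / 2 * t) by apply: cos_gt0_pihalf; rewrite xlt andbT; lra.
rewrite -/(cc s) -/(sgg s) in csg sg0 sgc c1 c0 hE.
have sqE : Num.sqrt ((2 - epsilon_of s) * epsilon_of s) = sgg s.
  have -> : (2 - epsilon_of s) * epsilon_of s = sgg s ^+ 2.
    apply/eqP; rewrite -subr_eq0.
    have -> : (2 - epsilon_of s) * epsilon_of s - sgg s ^+ 2 = 1 - (cc s ^+ 2 + sgg s ^+ 2).
      by rewrite /epsilon_of /cc; ring.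
    by rewrite csg subrr.
  by rewrite sqrtr_sqr ger0_norm.
have d0 : 0 < sgg s + 1 - cc s by lra.
have rE : crit_rhs (epsilon_of s) = (cc s + sgg s) * sgg s / (sgg s + 1 - cc s).
  rewrite /crit_rhs sqE.
  have n1 : 2 * (1 - epsilon_of s) != 0.
    by rewrite gt_eqF // /epsilon_of -/(cc s) mulr_gt0 //; lra.
  have n2 : sgg s + 1 - cc s != 0 by rewrite gt_eqF.
  apply/eqP; rewrite eqr_div // -subr_eq0.
  have -> : (2 + sgg s - epsilon_of s * (5 - 2 * epsilon_of s)) * (sgg s + 1 - cc s) -
    (cc s + sgg s) * sgg s * (2 * (1 - epsilon_of s)) = (cc s ^+ 2 + sgg s ^+ 2 - 1) * (1 - 2 * cc s).
    by rewrite /epsilon_of /cc; ring.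
  by rewrite csg subrr mul0r.
set S := sin (pi / 2 * t); set C := cos (pi / 2 * t); set x := pi / 2 * t.
have KE : K0 t s * sgg s = S * (sgg s + 1 - cc s) - (cc s + sgg s) * sgg s * (C * x).
  apply/eqP; rewrite -subr_eq0.
  have -> : K0 t s * sgg s - (S * (sgg s + 1 - cc s) - (cc s + sgg s) * sgg s * (C * x))
     = S * (cc s ^+ 2 + sgg s ^+ 2 - 1).
    by rewrite /K0 -/S -/C -/x; field; rewrite gt_eqF.
  by rewrite csg subrr mulr0.
rewrite /criterion rE tan_div // -/S -/C -/x.
have Cx0 : 0 < C * x by rewrite mulr_gt0.
rewrite ler_pdivlMr // mulrAC ler_pdivrMr //.
rewrite -(pmulr_lge0 _ sgp) KE subr_ge0.
split; [by move/(_ t1) | by move=> H _].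
Qed.

Lemma K0_mul {R : realType} (t s : R) : 2 <= s -> s < 2 * Num.sqrt 2 ->
  K0 t s * sgg s = sin (pi / 2 * t) * (sgg s + 1 - cc s)
     - (cc s + sgg s) * sgg s * (cos (pi / 2 * t) * (pi / 2 * t)).
Proof.
move=> s2 sR.
have [h8 q2 q0 csg [sg0 sgc c1 c0 hE]] := @s_facts _ _ s2 (ltW sR).
have sgp := @sgg_gt0 _ s s2 sR.
rewrite -/(cc s) -/(sgg s) in csg.
apply/eqP; rewrite -subr_eq0.
set S := sin (pi / 2 * t); set C := cos (pi / 2 * t); set x := pi / 2 * t.
have -> : K0 t s * sgg s - (S * (sgg s + 1 - cc s) - (cc s + sgg s) * sgg s * (C * x))
   = S * (cc s ^+ 2 + sgg s ^+ 2 - 1).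
  by rewrite /K0 -/S -/C -/x; field; rewrite gt_eqF.
by rewrite csg subrr mulr0.
Qed.

Lemma final_arith {R : realType} (H S C x sg c : R) : 1 <= H -> 0 < S -> 0 < C -> 0 < x ->
  H * S <= x -> x ^+ 3 * C <= S ^+ 3 -> 0 <= sg -> c <= 1 ->
  0 <= S * (sg + 1 - c) - H * sg * (C * x).
Proof.
move=> H1 S0 C0 x0 hx cube sg0 c1.
have HS0 : 0 <= H * S by apply: mulr_ge0; lra.
have hx2 : (H * S) * (H * S) <= x * x by apply: ler_pM.
have HCx : H * C * x <= S.
  rewrite leNgt; apply/negP => bad.
  have xx0 : 0 < x * x by rewrite mulr_gt0.
  have b1 : S * (x * x) < H * C * x * (x * x) by rewrite ltr_pM2r.
  have b2 : H * (S * S * S) <= S * (x * x).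
    have e1 : (H * S) * (H * S) * S <= x * x * S by rewrite ler_pM2r.
    have e2 : H * (S * S * S) <= H * H * (S * S * S).
      rewrite ler_pM2r; last by rewrite !mulr_gt0.
      by rewrite -[X in X <= _]mul1r ler_pM2r; lra.
    have -> : S * (x * x) = x * x * S by ring.
    apply: le_trans e2 _; apply: le_trans e1; rewrite le_eqVlt; apply/orP; left; apply/eqP; ring.
  have b3 : H * C * x * (x * x) <= H * (S * S * S).
    have -> : H * C * x * (x * x) = H * (x ^+ 3 * C) by ring.
    have -> : S * S * S = S ^+ 3 by ring.
    by rewrite ler_pM2l //; lra.
  lra.
have t1 : H * sg * (C * x) <= sg * S.
  have -> : H * sg * (C * x) = sg * (H * C * x) by ring.
  by apply: ler_wpM2l.
have t2 : sg * S <= S * (sg + 1 - c).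
  have -> : S * (sg + 1 - c) = sg * S + S * (1 - c) by ring.
  rewrite lerDl; apply: mulr_ge0; lra.
lra.
Qed.

Theorem mainTheorem3 (R : realType) (t s : R) :
  0 < t <= 1 -> 2 <= s <= 2 * Num.sqrt 2 ->
  (Rfun t s = concave_envelope (@Dom R) (@Rfun R) t s <-> criterion t s) /\
  ((pi / 2 * t) / sin (pi / 2 * t) >= (s + Num.sqrt (8 - s ^+ 2)) / (2 * Num.sqrt 2) ->
   criterion t s).
Proof.
move=> /andP[t0 t1] /andP[s2 sR].
case: (ltP t 1) => tl; last first.
  have e : t = 1 by apply/le_anti; rewrite t1 tl.
  rewrite e; have crit1 : criterion 1 s by rewrite /criterion ltxx.
  split => //; split => // _; by rewrite env_t1.
case: (ltP s (2 * Num.sqrt 2)) => sl; last first.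
  have e : s = 2 * Num.sqrt 2 by apply/le_anti; rewrite sR sl.
  rewrite e; have c := @crit_top R t t0 t1.
  split => //; split => // _; by rewrite env_top // ltW.
have crit := @crit_iff R t s t0 tl s2 sl.
split.
  split.
    move=> Heq; apply/crit; rewrite leNgt; apply/negP => K.
    by have := @env_gt R t s t0 tl s2 sl K; rewrite -Heq ltxx.
  by move=> /crit K; rewrite (@env_plane R t s).
move=> Hge; apply/crit.
have [h8 q2 q0 csg [sg0 sgc c1 c0 hE]] := @s_facts _ _ s2 (ltW sl).
have sgp := @sgg_gt0 _ s s2 sl.
rewrite -/(cc s) -/(sgg s) in csg sg0 sgc c1 c0 hE.
have [x0 [xp [pp [p0 p2]]]] := pi2_facts (ltW t0) (ltW tl).
have xpos : 0 < pi / 2 * t by rewrite mulr_gt0.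
have xlt : pi / 2 * t < pi / 2 by rewrite gtr_pMr.
have C0 : 0 < cos (pi / 2 * t) by apply: cos_gt0_pihalf; rewrite xlt andbT; lra.
have S0 : 0 < sin (pi / 2 * t) by apply: sin_gt0_pihalf; rewrite xpos xlt.
have cube := @cube_ineq R (pi / 2 * t) (ltW xpos) (ltW (lt_trans xlt p2)).
rewrite hE in Hge.
have [H1 _] := @hh_bounds R s s2 (ltW sl).
rewrite /hh hE in H1.
move: Hge; rewrite ler_pdivlMr // => Hge.
rewrite -(pmulr_lge0 _ sgp) K0_mul //.
exact: final_arith H1 S0 C0 xpos Hge cube sg0 c1.
Qed.
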